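(* Let $n\ge 2$ and consider the ladder system, i.e. the vector field $X_f=\sum_{i=1}^n x_i\big(\sum_{j=1}^n (1+i-j)\,x_j\big)\frac{\partial}{\partial x_i}$ on $\mathbf{C}^n$. Then for every $l,m\in\{1,\dots,n\}$ the vector field $$Y^l_m = x_m\, u^{\,l-m-1}\Big(D - u\,\frac{\partial}{\partial x_l}\Big)$$ is a Lie symmetry of the ladder system, i.e. $[X_f, Y^l_m]=0$ (on the open set $\{u\neq 0\}$, where the coefficients are defined).
   Context: Coordinates $x=(x_1,\dots,x_n)\in\mathbf{C}^n$. The $n$-dimensional homogeneous Lotka–Volterra (HLV) system with coefficients $a_{ij}\in\mathbf{C}$ is $\dot x_i = x_i\sum_{j=1}^n a_{ij}x_j$, $i=1,\dots,n$, identified with the vector field $X_f=\sum_i x_i\big(\sum_j a_{ij}x_j\big)\partial/\partial x_i$. The ladder system is the HLV system with $a_{ij}=1+i-j$ (matrix with first row $1,0,\dots,-n+2$ and last row $n,n-1,\dots,1$). Notation: $u=\sum_{j=1}^n x_j$ and $D=\sum_{j=1}^n x_j\,\partial/\partial x_j$. A vector field $X$ is a Lie symmetry of the system if $[X_f,X]=X_fX-XX_f=0$. *)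

(* Defs.v *)
From HB Require Import structures.
From mathcomp Require Import all_boot all_order all_algebra.
From mathcomp Require Import complex.
From mathcomp Require Import all_classical all_reals all_analysis.
Set Implicit Arguments. Unset Strict Implicit. Unset Printing Implicit Defensive.
Import Order.TTheory GRing.Theory Num.Theory.
Import numFieldNormedType.Exports.
Local Open Scope ring_scope.

(* Points of C^n are row vectors 'rV[C]_n; coordinate x_i (paper index i+1)
   is x ord0 i.  A vector field is a map C^n -> C^n (its coefficient vector). *)

Definition ev {K : numFieldType} {n : nat} (i : 'I_n) : 'rV[K]_n := delta_mx 0 i.

Definition pderiv {K : numFieldType} {n : nat} (i : 'I_n)
  (g : 'rV[K]_n -> K) (x : 'rV[K]_n) : K := 'D_(ev i) g x.

Definition coord {K : numFieldType} {n : nat} (k : 'I_n) (x : 'rV[K]_n) : K := x ord0 k.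

Definition lie_bracket {K : numFieldType} {n : nat}
  (X Y : 'rV[K]_n -> 'rV[K]_n) (x : 'rV[K]_n) : 'rV[K]_n :=
  \row_k \sum_(j < n)
     ((X x) ord0 j * pderiv j (fun y => (Y y) ord0 k) x
      - (Y x) ord0 j * pderiv j (fun y => (X y) ord0 k) x).

Definition usum {K : numFieldType} {n : nat} (x : 'rV[K]_n) : K := \sum_(j < n) x ord0 j.

Definition HLV {K : numFieldType} {n : nat} (A : 'M[K]_n) (x : 'rV[K]_n) : 'rV[K]_n :=
  \row_i (x ord0 i * \sum_(j < n) A i j * x ord0 j).

(* ladder matrix a_ij = 1 + i - j (shift invariant, so 0- or 1-based indexing agree) *)
Definition ladder_mx {K : numFieldType} (n : nat) : 'M[K]_n :=
  \matrix_(i, j) (1 + (i%:R : K) - (j%:R : K)).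

(* Euler field D = sum_j x_j d/dx_j  and  d/dx_l, as coefficient vectors *)
Definition euler {K : numFieldType} {n : nat} (x : 'rV[K]_n) : 'rV[K]_n := x.

Definition Ylm {K : numFieldType} {n : nat} (l m : 'I_n) (x : 'rV[K]_n) : 'rV[K]_n :=
  (x ord0 m * usum x ^ ((l%:Z - m%:Z - 1)%R : int)) *: (euler x - usum x *: ev l).

(* Main.v *)
Require Import Defs.
From HB Require Import structures.
From mathcomp Require Import all_boot all_order all_algebra.
From mathcomp Require Import complex.
From mathcomp Require Import all_classical all_reals all_analysis.
From mathcomp Require Import ring.
Import Order.TTheory GRing.Theory Num.Theory.
Import numFieldNormedType.Exports.
Local Open Scope ring_scope.


Lemma isdM {K : numFieldType} {V : normedModType K} (f g : V -> K) x v df dg : is_derive x v f df -> is_derive x v g dg ->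
  is_derive x v (fun y => f y * g y) (f x * dg + g x * df).
Proof. move=> H1 H2; exact: (is_deriveM H1 H2). Qed.

Lemma isdD {K : numFieldType} {V : normedModType K} (f g : V -> K) x v df dg : is_derive x v f df -> is_derive x v g dg ->
  is_derive x v (fun y => f y + g y) (df + dg).
Proof. move=> H1 H2; exact: (is_deriveD H1 H2). Qed.

Lemma isdB {K : numFieldType} {V : normedModType K} (f g : V -> K) x v df dg : is_derive x v f df -> is_derive x v g dg ->
  is_derive x v (fun y => f y - g y) (df - dg).
Proof. move=> H1 H2; exact: (is_deriveB H1 H2). Qed.

Lemma isdC {K : numFieldType} {V : normedModType K} (a : K) x v : is_derive x v (fun _ : V => a) 0.
Proof. exact: is_derive_cst. Qed.

Lemma isdV {K : numFieldType} {V : normedModType K} (f : V -> K) x v df : f x != 0 -> is_derive x v f df ->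
  is_derive x v (fun y => (f y)^-1) (- (f x) ^- 2 * df).
Proof.
move=> fx0 H; apply: DeriveDef.
  exact: derivableV fx0 ex_derive.
by rewrite deriveV // ?derive_val //; exact: ex_derive.
Qed.

Lemma isdX {K : numFieldType} {V : normedModType K} (f : V -> K) x v df k : is_derive x v f df ->
  is_derive x v (fun y => f y ^+ k) (k%:R * f x ^+ k.-1 * df).
Proof.
move=> H; have := is_deriveX k H.
have -> : (fun y => f y ^+ k) = f ^+ k by apply: funext => y; rewrite exprfctE.
by [].
Qed.
Arguments isdM {K V f g x v df dg}.
Arguments isdD {K V f g x v df dg}.
Arguments isdB {K V f g x v df dg}.
Arguments isdV {K V f x v df}.
Arguments isdX {K V f x v df}.

Lemma isd_coord {K : numFieldType} n (k : 'I_n) (x v : 'rV[K]_n) :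
  is_derive x v (fun y : 'rV[K]_n => y ord0 k) (v ord0 k).
Proof.
have @f : {linear 'rV[K]_n -> K}.
  by exists (fun N : 'M[K]_(_, _) => N ord0 k); do 2![eexists]; do ?[constructor];
     rewrite ?mxE// => ? *; rewrite ?mxE//; move=> ?; rewrite !mxE.
have -> : (fun y : 'rV[K]_n => y ord0 k) = f by [].
apply: DeriveDef; first exact/diff_derivable/linear_differentiable/coord_continuous.
rewrite deriveE; last exact/linear_differentiable/coord_continuous.
by rewrite diff_lin //; exact: coord_continuous.
Qed.


Lemma isd_val {K : numFieldType} {V : normedModType K} (f : V -> K) x v df :
  is_derive x v f df -> 'D_v f x = df.
Proof. by move=> H; rewrite derive_val. Qed.

Lemma isd_lin {K : numFieldType} n (a : 'I_n -> K) (x v : 'rV[K]_n) :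
  is_derive x v (fun y : 'rV[K]_n => \sum_(j < n) a j * y ord0 j)
    (\sum_(j < n) a j * v ord0 j).
Proof.
have := @is_derive_sum _ _ _ n (fun j (y : 'rV[K]_n) => a j * y ord0 j) x v
  (fun j => a j * v ord0 j).
rewrite fct_sumE; apply => j.
have := isdM (isdC (a j) x v) (isd_coord _ j x v).
by move=> HH; apply: (is_derive_eq HH); rewrite mulr0 addr0.
Qed.

Lemma isd_usum {K : numFieldType} n (x v : 'rV[K]_n) :
  is_derive x v usum (usum v).
Proof.
have := isd_lin _ (fun _ => 1) x v.
have -> : (fun y : 'rV[K]_n => \sum_(j < n) 1 * y ord0 j) = usum.
  by apply: funext => y; rewrite /usum; apply: eq_bigr => j _; rewrite mul1r.
by move=> HH; apply: (is_derive_eq HH); rewrite /usum; apply: eq_bigr => j _; rewrite mul1r.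
Qed.

Lemma isd_powz {K : numFieldType} {V : normedModType K} (f : V -> K) x v df (p : int) :
  f x != 0 -> is_derive x v f df ->
  is_derive x v (fun y => f y ^ p) (p%:~R * f x ^ (p - 1) * df).
Proof.
move=> fx0 H; case: p => k.
  have := isdX k H; move=> HH; apply: (is_derive_eq HH).
  case: k HH => [|k] HH; first by rewrite !mul0r.
  have -> : (k.+1%:Z - 1) = k%:Z by rewrite intS addrC addKr.
  by [].
have := isdV (f := fun y => f y ^+ k.+1) (expf_neq0 _ fx0) (isdX k.+1 H).
have -> : (fun y => (f y ^+ k.+1)^-1) = (fun y => f y ^ Negz k) by [].
move=> HH; apply: (is_derive_eq HH).
have -> : Negz k - 1 = Negz k.+1 by rewrite !NegzE (intS k.+1) opprD addrC.
change (f x ^ Negz k.+1) with (f x ^+ k.+2)^-1.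
rewrite /= NegzE rmorphN /= !exprS expr0 mulr1.
have b0 : f x ^+ k != 0 by rewrite expf_neq0.
by field; rewrite b0 fx0.
Qed.

Lemma sumdl {K : numFieldType} n (f : 'I_n -> K) (c : 'I_n) :
  \sum_(j < n) f j * (j == c)%:R = f c.
Proof.
rewrite (bigD1 c) //= eqxx mulr1 big1 ?addr0 // => j /negbTE ->; exact: mulr0.
Qed.

Lemma sumdr {K : numFieldType} n (f : 'I_n -> K) (c : 'I_n) :
  \sum_(j < n) f j * (c == j)%:R = f c.
Proof. rewrite -(sumdl _ f c); apply: eq_bigr => j _; by rewrite eq_sym. Qed.

Lemma evE {K : numFieldType} n (j i : 'I_n) : (ev j : 'rV[K]_n) ord0 i = (i == j)%:R.
Proof. by rewrite /ev mxE eqxx. Qed.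

Lemma usum_ev {K : numFieldType} n (j : 'I_n) : usum (ev j : 'rV[K]_n) = 1.
Proof.
rewrite /usum -(sumdl _ (fun _ => (1:K)) j); apply: eq_bigr => i _.
by rewrite evE mul1r.
Qed.

Lemma sum7 {K : numFieldType} n (F1 F2 F3 F4 F5 F6 F7 : 'I_n -> K) c1 c2 c3 c4 c5 c6 c7 :
  \sum_(j < n) (c1 * F1 j + c2 * F2 j + c3 * F3 j - c4 * F4 j + c5 * F5 j
     - c6 * F6 j + c7 * F7 j) =
  c1 * \sum_j F1 j + c2 * \sum_j F2 j + c3 * \sum_j F3 j - c4 * \sum_j F4 j
   + c5 * \sum_j F5 j - c6 * \sum_j F6 j + c7 * \sum_j F7 j.
Proof. by rewrite !(big_split, sumrB) /= !sumrN -!mulr_sumr. Qed.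
Arguments isd_powz {K V f x v df} p.
Arguments isd_val {K V f x v df}.

Lemma mainK (K : numFieldType) n (l m : 'I_n) (x : 'rV[K]_n) (hu : usum x != 0) :
  lie_bracket (HLV (ladder_mx n)) (Ylm l m) x = 0.
Proof.
pose d := usum x.
pose p : int := (l%:Z - m%:Z - 1).
pose P := d ^ p. pose W := d ^ (p - 1).
pose a (i j : 'I_n) : K := 1 + i%:R - j%:R.
pose L (i : 'I_n) := \sum_(j < n) a i j * x ord0 j.
pose S := \sum_(j < n) j%:R * x ord0 j.
have hY k j : pderiv j (fun y => Ylm l m y ord0 k) x =
   (x ord0 m * p%:~R * W + P * (m == j)%:R) * (x ord0 k - d * (k == l)%:R)
   + x ord0 m * P * ((k == j)%:R - (k == l)%:R).
  have -> : (fun y => Ylm l m y ord0 k) = (fun y => (y ord0 m * usum y ^ p) *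
      (y ord0 k - usum y * (ev l : 'rV[K]_n) ord0 k)).
    by apply: funext => y; rewrite /Ylm /euler !mxE.
  rewrite /pderiv (isd_val (isdM (isdM (isd_coord _ m _ _) (isd_powz p hu (isd_usum _ _ _)))
     (isdB (isd_coord _ k _ _) (isdM (isd_usum _ _ _) (isdC _ _ _))))).
  rewrite !evE usum_ev /P /W /d; ring.
have hX k j : pderiv j (fun y => HLV (ladder_mx n) y ord0 k) x =
   (k == j)%:R * L k + x ord0 k * a k j.
  have -> : (fun y => HLV (ladder_mx n) y ord0 k) = (fun y : 'rV[K]_n => y ord0 k *
      \sum_(i < n) (ladder_mx n : 'M[K]_n) k i * y ord0 i).
    by apply: funext => y; rewrite /HLV !mxE.
  rewrite /pderiv (isd_val (isdM (isd_coord _ k _ _) (isd_lin _ _ _ _))).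
  have -> : \sum_(i < n) (ladder_mx n : 'M[K]_n) k i * (ev j : 'rV[K]_n) ord0 i = a k j.
    rewrite -(sumdl _ (a k) j); apply: eq_bigr => i _; by rewrite evE /ladder_mx mxE.
  rewrite evE /L addrC mulrC; congr (_ * _ + _).
  by apply: eq_bigr => i _; rewrite /ladder_mx mxE.
have hL i : L i = (1 + i%:R) * d - S.
  rewrite /L /S /d /usum mulr_sumr -sumrB; apply: eq_bigr => j _; rewrite /a; ring.
have hXj j : HLV (ladder_mx n) x ord0 j = x ord0 j * L j.
  by rewrite /HLV mxE /L; congr (_ * _); apply: eq_bigr => i _; rewrite mxE.
have hYj j : Ylm l m x ord0 j = x ord0 m * P * (x ord0 j - d * (j == l)%:R).
  by rewrite /Ylm /euler !mxE.
have hPW : P = W * d by rewrite /P /W -{1}(subrK 1 p) expfzDr // expr1z.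
have hT1 : \sum_(j < n) x ord0 j * L j = d * d.
  rewrite (eq_bigr (fun j => x ord0 j * d + (j%:R * x ord0 j) * d - x ord0 j * S)); last first.
    by move=> j _; rewrite hL; ring.
  by rewrite sumrB big_split /= -!mulr_suml /S /d /usum; ring.
have hp : p%:~R = l%:R - m%:R - 1 :> K by rewrite /p !rmorphB /= rmorph1.
rewrite /lie_bracket; apply/rowP => k; rewrite !mxE.
pose e : K := (k == l)%:R.
pose C1 := x ord0 m * p%:~R * W * (x ord0 k - d * e) - x ord0 m * P * e.
pose C2 := P * (x ord0 k - d * e).
pose C3 := x ord0 m * P.
pose Q := x ord0 m * P * x ord0 k.
pose Rr := x ord0 m * P * L k.
rewrite (eq_bigr (fun j => C1 * (x ord0 j * L j) + C2 * (x ord0 j * L j * (m == j)%:R)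
   + C3 * (x ord0 j * L j * (k == j)%:R) - Q * (a k j * x ord0 j)
   + Q * (d * a k j * (j == l)%:R) - Rr * (x ord0 j * (k == j)%:R)
   + Rr * (d * (j == l)%:R * (k == j)%:R))); last first.
  move=> j _; rewrite hXj hYj hX hY /C1 /C2 /C3 /Q /Rr /e; ring.
rewrite sum7 hT1 (sumdr _ (fun j => x ord0 j * L j)) (sumdr _ (fun j => x ord0 j * L j)).
rewrite (sumdl _ (fun j => d * a k j)) (sumdr _ (fun j => x ord0 j)).
rewrite (sumdr _ (fun j => d * (j == l)%:R)).
have hLk : \sum_(j < n) a k j * x ord0 j = (1 + k%:R) * d - S := hL k.
rewrite hLk /C1 /C2 /C3 /Q /Rr /e !hL hPW hp /a.
by case: (eqVneq k l) => [->|hkl]; rewrite ?mulr1n ?mulr0n; ring.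
Qed.


Local Open Scope complex_scope.

Theorem theorem1 (R : rcfType) (n : nat) (hn : (2 <= n)%N) (l m : 'I_n)
  (x : 'rV[R[i]]_n) (hu : usum x != 0) :
  lie_bracket (HLV (ladder_mx n)) (Ylm l m) x = 0.
Proof. exact: mainK. Qed.
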